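(* Let $C>0$, $L>0$, $R>0$, $\nu\in\mathbb{R}$, $h>0$ and let $\hat \varphi:\mathbb{R}\to\mathbb{R}$ be any function. Suppose real sequences $v_{C,k},i_{C,k},i_{L,k},v_{L,k},v_{R,k},i_{R,k},v_{M,k},i_{M,k},q_{M,k}$, $k=0,1,2,\dots$, satisfy for all $k$: $$i_{C,k}=C\frac{v_{C,k+1}-v_{C,k}}{h},\quad v_{L,k}=L\frac{i_{L,k+1}-i_{L,k}}{h},\quad v_{R,k}=Ri_{R,k},$$ $$v_{M,k}=\frac{\hat \varphi(q_{M,k+1})-\hat \varphi(q_{M,k})}{h},\quad q_{M,k+1}=q_{M,k}+hi_{M,k},$$ $$v_{C,k}=v_{L,k}+v_{M,k},\quad v_{C,k}=v_{R,k},\quad i_{L,k}+i_{R,k}+i_{C,k}-\nu i_{L,k}=0,\quad i_{L,k}=i_{M,k}.$$ Then: 1) $(i_{L,k},v_{C,k},q_{M,k})$ is an orbit of the three-dimensional map $$\begin{aligned} i_{L,k+1}&=i_{L,k}-\tfrac{1}{L}\big(\hat \varphi(q_{M,k}+hi_{L,k})-\hat \varphi(q_{M,k})\big)+\tfrac{h}{L}v_{C,k},\\ v_{C,k+1}&=\big(1-\tfrac{h}{RC}\big)v_{C,k}+\tfrac{h}{C}(\nu-1)i_{L,k},\\ q_{M,k+1}&=q_{M,k}+hi_{L,k}.\end{aligned}$$ 2) For any step size $h>0$, the function $\Theta_{DMLC}(v_C,i_L,q_M)=RCv_C+Li_L+\hat\varphi(q_M)+R(1-\nu)q_M$ is a first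 integral of this map, i.e. it takes the same value at $k+1$ as at $k$ for all $k\ge0$ along every orbit. 3) Consequently $\mathbb{R}^3$ is foliated into the invariant sets $\mathcal{M}_{DMLC}(\Phi_0)=\{(v_C,i_L,q_M)\in\mathbb{R}^3:\Theta_{DMLC}(v_C,i_L,q_M)=\Phi_0\}$, $\Phi_0\in\mathbb{R}$, and along any orbit of the map lying in $\mathcal{M}_{DMLC}(\Phi_0)$, setting $\varphi^0_{C,k}=h\sum_{j=0}^{k-1}v_{C,j}$ and $y_k=\varphi^0_{C,k}+R(\nu-1)q_{M,0}-CRv_{C,0}$, the pair $(q_{M,k},y_k)$ obeys the two-dimensional map $$q_{M,k+1}=q_{M,k}+\tfrac{h}{L}y_k-\tfrac{h}{L}\hat\varphi(q_{M,k})+\tfrac{h}{L}\Phi_0,\qquad y_{k+1}=\big(1-\tfrac{h}{RC}\big)y_k+\tfrac{h}{C}(\nu-1)q_{M,k}.$$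
   Context: These equations model the dual of a discrete-time memristor Murali-Lakshmanan-Chua circuit: an inductor $L$ in series with a charge-controlled memristor $\varphi_M=\hat\varphi(q_M)$, connected in parallel with a resistor $R$, a capacitor $C$ and a current-controlled current source of value $\nu i_L$, discretized with step size $h$. The quantity $\varphi^0_{C,k}$ is the (discrete) incremental flux of the capacitor. *)

(* Defs.v *)
From Stdlib Require Import Reals Lra.
Open Scope R_scope.

(* State of the 3D map, ordered as in the paper: (i_L, v_C, q_M). *)
Definition state := (R * R * R)%type.

Definition DMLC_map (C L Rr nu h : R) (phi : R -> R) (s : state) : state :=
  let '(iL, vC, qM) := s in
  ( iL - (1 / L) * (phi (qM + h * iL) - phi qM) + (h / L) * vC,
    (1 - h / (Rr * C)) * vC + (h / C) * (nu - 1) * iL,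
    qM + h * iL ).

Definition Theta_DMLC (C L Rr nu : R) (phi : R -> R) (vC iL qM : R) : R :=
  Rr * C * vC + L * iL + phi qM + Rr * (1 - nu) * qM.

Definition Theta_st (C L Rr nu : R) (phi : R -> R) (s : state) : R :=
  let '(iL, vC, qM) := s in Theta_DMLC C L Rr nu phi vC iL qM.

Definition M_DMLC (C L Rr nu : R) (phi : R -> R) (Phi0 : R) (s : state) : Prop :=
  Theta_st C L Rr nu phi s = Phi0.

Definition is_orbit (f : state -> state) (x : nat -> state) : Prop :=
  forall k, x (S k) = f (x k).

Fixpoint psum (u : nat -> R) (k : nat) : R :=
  match k with
  | O => 0
  | S k' => psum u k' + u k'
  end.

Definition st_iL (s : state) : R := fst (fst s).
Definition st_vC (s : state) : R := snd (fst s).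
Definition st_qM (s : state) : R := snd s.

(* Main.v *)
Require Import Defs.
From Stdlib Require Import Reals Lra.
Open Scope R_scope.

Theorem proposition4 (C L Rr nu h : R) (phi : R -> R)
  (HC : 0 < C) (HL : 0 < L) (HR : 0 < Rr) (Hh : 0 < h) :
  (* 1) circuit solutions are orbits of the 3D map *)
  (forall vC iC iL vL vR iR vM iM qM : nat -> R,
     (forall k,
        iC k = C * (vC (S k) - vC k) / h /\
        vL k = L * (iL (S k) - iL k) / h /\
        vR k = Rr * iR k /\
        vM k = (phi (qM (S k)) - phi (qM k)) / h /\
        qM (S k) = qM k + h * iM k /\
        vC k = vL k + vM k /\
        vC k = vR k /\
        iL k + iR k + iC k - nu * iL k = 0 /\
        iL k = iM k) ->
     forall k, (iL (S k), vC (S k), qM (S k))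
               = DMLC_map C L Rr nu h phi (iL k, vC k, qM k))
  /\
  (* 2) Theta is a first integral of the map *)
  (forall x : nat -> state, is_orbit (DMLC_map C L Rr nu h phi) x ->
     forall k, Theta_st C L Rr nu phi (x (S k)) = Theta_st C L Rr nu phi (x k))
  /\
  (* 3) foliation into invariant level sets, and reduction to a 2D map *)
  ((forall s : state, exists! Phi0 : R, M_DMLC C L Rr nu phi Phi0 s)
   /\
   (forall (Phi0 : R) (s : state), M_DMLC C L Rr nu phi Phi0 s ->
      M_DMLC C L Rr nu phi Phi0 (DMLC_map C L Rr nu h phi s))
   /\
   (forall (Phi0 : R) (x : nat -> state),
      is_orbit (DMLC_map C L Rr nu h phi) x ->
      (forall k, M_DMLC C L Rr nu phi Phi0 (x k)) ->
      forall k : nat,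
        let q := fun j => st_qM (x j) in
        let y := fun j => h * psum (fun i => st_vC (x i)) j
                          + Rr * (nu - 1) * q O - C * Rr * st_vC (x O) in
        q (S k) = q k + (h / L) * y k - (h / L) * phi (q k) + (h / L) * Phi0 /\
        y (S k) = (1 - h / (Rr * C)) * y k + (h / C) * (nu - 1) * q k)).
Proof.
  assert (HCn : C <> 0) by lra. assert (HLn : L <> 0) by lra.
  assert (HRn : Rr <> 0) by lra. assert (Hhn : h <> 0) by lra.
  assert (Inv : forall s, Theta_st C L Rr nu phi (DMLC_map C L Rr nu h phi s)
                          = Theta_st C L Rr nu phi s).
  { intros [[a b] c]. unfold DMLC_map, Theta_st, Theta_DMLC. field. auto. }
  split.
  { intros vC iC iL vL vR iR vM iM qM H k.
    destruct (H k) as (H1 & H2 & H3 & H4 & H5 & H6 & H7 & H8 & H9).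
    unfold DMLC_map. rewrite <- H9 in H5.
    assert (E1 : iL (S k) = iL k - 1 / L * (phi (qM k + h * iL k) - phi (qM k)) + h / L * vC k).
    { assert (Ea : iL (S k) = iL k + h / L * vL k) by (rewrite H2; field; auto).
      assert (Eb : vL k = vC k - vM k) by lra.
      rewrite Ea, Eb, H4, H5. field. auto. }
    assert (E2 : vC (S k) = (1 - h / (Rr * C)) * vC k + h / C * (nu - 1) * iL k).
    { assert (iR k = vC k / Rr) by (rewrite H7, H3; field; auto).
      assert (Ec : iC k = (nu - 1) * iL k - vC k / Rr) by lra.
      assert (Ed : vC (S k) = vC k + h / C * iC k) by (rewrite H1; field; auto).
      rewrite Ed, Ec. field. auto. }
    rewrite E1, E2, H5. reflexivity. }
  split.
  { intros x Hx k. rewrite Hx. apply Inv. }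
  split; [|split].
  { intros s. exists (Theta_st C L Rr nu phi s). unfold M_DMLC. split; auto. }
  { intros Phi0 s Hs. unfold M_DMLC in *. rewrite Inv. auto. }
  intros Phi0 x Hx HM k q y.
  assert (Hys' : forall j, y (S j) = y j + h * st_vC (x j)) by (intro j; unfold y; simpl; ring).
  assert (Hy : forall j, y j = - Rr * C * st_vC (x j) + Rr * (nu - 1) * q j).
  { induction j.
    - unfold y, q. simpl. ring.
    - rewrite Hys', IHj. unfold q. rewrite Hx.
      destruct (x j) as [[a b] c]. unfold DMLC_map, st_vC, st_qM. simpl.
      field. auto. }
  assert (Hys := Hys' k).
  pose proof (HM k) as Hk. unfold M_DMLC in Hk.
  rewrite Hys, !Hy. unfold q. rewrite Hx.
  destruct (x k) as [[a b] c]. unfold DMLC_map, st_vC, st_qM, Theta_st, Theta_DMLC in *. simpl in *.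
  rewrite <- Hk. split; field; auto.
Qed.
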